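(* Let $S$ be a semigroup and $a_1,a_2,\dotsc$ a sequence in $S$. Then $a_1,a_2,\dotsc$ has a proper sumsequence if and only if it has a sumsequence $b_1,b_2,\dotsc$ with $\bigcap_{n=1}^{\infty}\mathrm{FS}(b_n,b_{n+1},\dotsc)=\emptyset$.
   Context: Semigroups are written additively and are not assumed commutative. For a sequence $a_1,a_2,\dotsc$ and a finite nonempty index set $F=\{i_1<\dotsb<i_m\}\subseteq\mathbb N$, let $a_F:=a_{i_1}+\dotsb+a_{i_m}$. For finite index sets $F_1,F_2$, write $F_1<F_2$ if every element of $F_1$ is smaller than every element of $F_2$. A sumsequence of $a_1,a_2,\dotsc$ is a sequence $a_{F_1},a_{F_2},\dotsc$ for some sequence $F_1<F_2<\dotsb$ of nonempty finite index sets. A sequence is proper if $a_{F_1}\ne a_{F_2}$ for all nonempty finite index sets $F_1<F_2$. $\mathrm{FS}(b_n,b_{n+1},\dotsc)$ denotes the set of all sums $b_{i_1}+\dotsb+b_{i_m}$ with $m\ge1$ and $n\le i_1<\dotsb<i_m$. *)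

(* Defs.v *)
From mathcomp Require Import all_boot.
Set Implicit Arguments. Unset Strict Implicit. Unset Printing Implicit Defensive.

(* A finite nonempty index set F = {i_1 < ... < i_m} is represented by the
   strictly increasing nonempty list [:: i_1; ...; i_m]. *)
Definition idxset (F : seq nat) : bool := (F != [::]) && sorted ltn F.

(* a_F = a_{i_1} + ... + a_{i_m} (in this order; op need not be commutative).
   The value on the empty list is an irrelevant default (never used, since
   every index set is required to be nonempty). *)
Definition fsum (S : Type) (op : S -> S -> S) (a : nat -> S) (F : seq nat) : S :=
  if F is i :: t then foldl (fun s j => op s (a j)) (a i) t else a 0.

Definition lt_set (F1 F2 : seq nat) : bool :=
  all (fun i => all (fun j => i < j) F2) F1.

Definition is_sumseq (S : Type) (op : S -> S -> S) (a b : nat -> S) : Prop :=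
  exists F : nat -> seq nat,
    (forall n, idxset (F n)) /\ (forall n, lt_set (F n) (F n.+1)) /\
    (forall n, b n = fsum op a (F n)).

Definition proper_seq (S : Type) (op : S -> S -> S) (a : nat -> S) : Prop :=
  forall F1 F2, idxset F1 -> idxset F2 -> lt_set F1 F2 ->
    fsum op a F1 <> fsum op a F2.

Definition FS (S : Type) (op : S -> S -> S) (b : nat -> S) (n : nat) (x : S) : Prop :=
  exists F, idxset F /\ all (fun i => n <= i) F /\ x = fsum op b F.

(* Main.v *)
From Stdlib Require Import Classical ClassicalEpsilon.
Require Import Defs.
From mathcomp Require Import all_boot.

Lemma max_in (s : seq nat) : s != [::] -> exists2 k, k \in s & all (fun y => y <= k) s.
Proof.
elim: s => // x [|y t] IH _.
  by exists x; rewrite ?inE ?eqxx //= leqnn.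
have [k kin kall] := IH isT.
case: (leqP x k) => h.
  exists k; first by rewrite inE kin orbT.
  by rewrite /= h; exact: kall.
exists x; first by rewrite mem_head.
apply/allP => z; rewrite inE => /orP [/eqP->|zin]; first by [].
exact: leq_trans (allP kall z zin) (ltnW h).
Qed.

Lemma fsum_map S op (f : nat -> S) (m : nat -> nat) F : F != [::] ->
  fsum op (fun i => f (m i)) F = fsum op f (map m F).
Proof.
case: F => //= i t _; elim: t (f (m i)) => //= j t IH z; exact: IH.
Qed.

Lemma subseq_iota s K : sorted ltn s -> all (fun i => i < K) s -> subseq s (iota 0 K).
Proof.
move=> ss sa.
have -> : s = [seq i <- iota 0 K | i \in s].
  apply: (irr_sorted_eq ltn_trans ltnn ss).
    by apply: sorted_filter; [exact: ltn_trans | exact: iota_ltn_sorted].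
  move=> x; rewrite mem_filter mem_iota add0n /=.
  case xs: (x \in s) => //=.
  by move/allP: sa => /(_ x xs) ->.
exact: filter_subseq.
Qed.

Lemma bound_ex (g : seq nat -> nat) K : exists N, forall G, subseq G (iota 0 K) -> g G <= N.
Proof.
exists (\max_(t : K.-tuple bool) g (mask t (iota 0 K))).
move=> G /subseqP [m sz ->]; rewrite size_iota in sz.
exact: (@leq_bigmax _ (fun t : K.-tuple bool => g (mask t (iota 0 K))) (@Tuple K bool m (introT eqP sz))).
Qed.

Fixpoint mk (B : nat -> nat) k := if k is k'.+1 then mk B k' + 1 + B (mk B k' + 1) else 0.

Lemma mk_lt B i j : i < j -> mk B i < mk B j.
Proof.
elim: j => // j IH; rewrite ltnS leq_eqVlt => /orP [/eqP->| /IH h] /=.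
  by rewrite addn1 leq_addr.
by apply: (ltn_trans h); rewrite addn1 leq_addr.
Qed.

Lemma mk_le B i j : i <= j -> mk B i <= mk B j.
Proof. by rewrite leq_eqVlt => /orP [/eqP->|/(mk_lt B)/ltnW]. Qed.

Lemma lt_set_trans F G H : G != [::] -> lt_set F G -> lt_set G H -> lt_set F H.
Proof.
case: G => // g G _ /allP FG /allP GH; apply/allP => i iin; apply/allP => j jin.
have /= /andP [ig _] := FG i iin.
have := allP (GH g (mem_head _ _)) j jin.
exact: ltn_trans.
Qed.

Lemma chain (Fb : nat -> seq nat) : (forall n, idxset (Fb n)) ->
  (forall n, lt_set (Fb n) (Fb n.+1)) -> forall i j, i < j -> lt_set (Fb i) (Fb j).
Proof.
move=> iF lF i; elim=> // j IH; rewrite ltnS leq_eqVlt => /orP [/eqP->|/IH h]; first exact: lF.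
apply: (@lt_set_trans _ (Fb j) _ _ h (lF j)).
by case/andP: (iF j).
Qed.

Theorem proposition2p3 (S : Type) (op : S -> S -> S) (op_assoc : associative op)
    (a : nat -> S) :
  (exists b : nat -> S, is_sumseq op a b /\ proper_seq op b) <->
  (exists b : nat -> S, is_sumseq op a b /\
     (forall x : S, ~ (forall n : nat, FS op b n x))).
Proof.
split.
  move=> [b [sb pb]]; exists b; split=> // x H.
  have [F [iF [_ ex]]] := H 0.
  have Fn : F != [::] by case/andP: iF.
  have [k kin kall] := max_in _ Fn.
  have [G [iG [Ga eG]]] := H k.+1.
  apply: (pb F G iF iG); last by rewrite -ex -eG.
  apply/allP => i iin; apply/allP => j jin.
  exact: leq_ltn_trans (allP kall i iin) (allP Ga j jin).
move=> [b [[Fb [iFb [ltFb eb]]] Hb]].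
have Hn : forall x, exists n, ~ FS op b n x.
  by move=> x; apply: not_all_ex_not; exact: Hb.
pose nx x := proj1_sig (constructive_indefinite_description _ (Hn x)).
have nxP : forall x, ~ FS op b (nx x) x :=
  fun x => proj2_sig (constructive_indefinite_description _ (Hn x)).
have Bd : forall M, exists N, forall G, subseq G (iota 0 M) -> nx (fsum op b G) <= N :=
  fun M => bound_ex _ M.
pose B M := proj1_sig (constructive_indefinite_description _ (Bd M)).
have BP : forall M G, subseq G (iota 0 M) -> nx (fsum op b G) <= B M :=
  fun M => proj2_sig (constructive_indefinite_description _ (Bd M)).
exists (fun k => b (mk B k)); split.
  exists (fun k => Fb (mk B k)); split; first by move=> n; exact: iFb.
  split; last by move=> n; rewrite eb.
  move=> n; apply: (chain _ iFb ltFb); exact: mk_lt.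
move=> F1 F2 i1 i2 l12.
have F1n : F1 != [::] by case/andP: i1.
have F2n : F2 != [::] by case/andP: i2.
rewrite (@fsum_map _ op b (mk B) _ F1n) (@fsum_map _ op b (mk B) _ F2n).
set x := fsum op b (map (mk B) F1) => E.
apply: (nxP x); exists (map (mk B) F2); split.
  rewrite /idxset; apply/andP; split; first by case: (F2) F2n.
  apply: (homo_sorted (@mk_lt B)); by case/andP: i2.
split; last by [].
have [k kin kall] := max_in _ F1n.
have h1 : nx x <= B (mk B k + 1).
  apply: BP; apply: subseq_iota.
    apply: (homo_sorted (@mk_lt B)); by case/andP: i1.
  apply/allP => y /mapP [i iin ->].
  by rewrite addn1 ltnS; apply: mk_le; exact: (allP kall i iin).
apply/allP => y /mapP [j jin ->].
have kj : k < j := allP (allP l12 k kin) j jin.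
apply: (leq_trans h1); apply: (leq_trans _ (mk_le B _ _ kj)) => /=.
exact: leq_addl.
Qed.
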